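(* Let $V$ be as defined in the context. Then $V$ has the same distribution as $\sum_{i=1}^{K}Y_i$, where: - $K$ is Poisson with mean $\frac{\theta}{(1-q)\gamma}$; - $Y_1,Y_2,\dots$ are i.i.d. and independent of $K$, each distributed as the size at an independent time $X\sim\mathrm{Exp}(\delta)$ of a linear birth–death process with rates $\alpha,\beta$ started from one cell. In particular $\mathbb{E}[\varphi_X(z)]=1-(1-q)\,{}_2F_1(1,\gamma;1+\gamma;\xi(z))$, where $\varphi_s(z)=1-\frac{1-q}{1-\xi(z)e^{-\lambda s}}$ is the probability generating function of the birth–death process at time $s$. Equivalently, $$\log\mathbb{E}[z^V]=\frac{\theta}{(1-q)\gamma}\int_0^\infty(\varphi_t(z)-1)\,\delta e^{-\delta t}\,dt .$$
   Context: Fix $\delta>0$ and $\alpha>\beta\ge0$, put $\lambda=\alpha-\beta$, $q=\beta/\alpha$, $\gamma=\delta/\lambda$, and fix $\theta>0$. Let $\xi(z)=\frac{q-z}{1-z}$. Let $V$ be a random variable on $\{0,1,\dots\}$ with $\log\mathbb{E}[z^V]=-\frac{\theta}{\gamma}{}_2F_1(1,\gamma;1+\gamma;\xi(z))$ for $z\in[0,1)$, where ${}_2F_1$ is the Gauss hypergeometric function. (This $V$ is the distributional limit of the total mutant count as $N\to\infty$, $\nu=\alpha\theta/N$, in the model where the wild type is $e^{\delta t}$ and mutants appear at Poisson rate $\nu e^{\delta t}$.) *)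

(* Defs.v *)
From Stdlib Require Import Reals Factorial.
Open Scope R_scope.

Definition lam (alpha beta : R) : R := alpha - beta.
Definition qq (alpha beta : R) : R := beta / alpha.
Definition gam (delta alpha beta : R) : R := delta / (alpha - beta).

Definition xi (q z : R) : R := (q - z) / (1 - z).

Definition phi (alpha beta s z : R) : R :=
  1 - (1 - qq alpha beta) / (1 - xi (qq alpha beta) z * exp (- lam alpha beta * s)).

Definition has_integral_0_inf (f : R -> R) (l : R) : Prop :=
  (forall b, 0 <= b -> exists pr : Riemann_integrable f 0 b, True) /\
  (forall eps, 0 < eps -> exists M, forall b (pr : Riemann_integrable f 0 b),
      M <= b -> Rabs (RiemannInt pr - l) < eps).

Definition has_integral_0_1 (f : R -> R) (l : R) : Prop :=
  (forall a, 0 < a <= 1 -> exists pr : Riemann_integrable f a 1, True) /\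
  (forall eps, 0 < eps -> exists d, 0 < d /\ forall a (pr : Riemann_integrable f a 1),
      0 < a < d -> a <= 1 -> Rabs (RiemannInt pr - l) < eps).

(** hyp2F1_1 g x F  <->  F = 2F1(1, g; 1+g; x), via Euler's integral
    2F1(1,g;1+g;x) = g * int_0^1 t^(g-1) (1 - x t)^(-1) dt  (g > 0, x < 1),
    which is the analytic continuation of the Gauss series to x < 1. *)
Definition hyp2F1_1 (g x F : R) : Prop :=
  has_integral_0_1 (fun t => g * Rpower t (g - 1) / (1 - x * t)) F.

Definition is_pmf (p : nat -> R) : Prop :=
  (forall n, 0 <= p n) /\ infinite_sum p 1.

Definition pgf_at (p : nat -> R) (z G : R) : Prop :=
  infinite_sum (fun n => p n * z ^ n) G.

(** Law of the linear birth-death process (birth rate alpha, death rate beta,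
    one initial cell): P t is the law of the population size at time t,
    characterized by its pgf phi_t. *)
Definition is_BD_law (alpha beta : R) (P : R -> nat -> R) : Prop :=
  forall t, 0 <= t -> is_pmf (P t) /\
    (forall z, 0 <= z < 1 -> pgf_at (P t) z (phi alpha beta t z)).

Definition conv (p r : nat -> R) (n : nat) : R :=
  sum_f_R0 (fun i => p i * r (n - i)%nat) n.

Fixpoint conv_pow (p : nat -> R) (k : nat) : nat -> R :=
  match k with
  | O => fun n => match n with O => 1 | _ => 0 end
  | S k' => conv p (conv_pow p k')
  end.

Definition poisson_pmf (mu : R) (k : nat) : R := exp (- mu) * mu ^ k / INR (fact k).

(* Main.v *)
Require Import Defs.
From Stdlib Require Import Reals Lra Lia Factorial.
From Coquelicot Require Import Coquelicot.
Open Scope R_scope.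

Definition HI (f : R -> R) (l : R) : Prop :=
  (forall b, 0 <= b -> ex_RInt f 0 b) /\
  (forall eps, 0 < eps -> exists M, 0 <= M /\ forall b, M <= b -> Rabs (RInt f 0 b - l) < eps).

Lemma HI_to f l : HI f l -> has_integral_0_inf f l.
Proof.
  intros [H1 H2]; split.
  - intros b Hb. exists (ex_RInt_Reals_0 _ _ _ (H1 b Hb)); exact I.
  - intros eps Heps. destruct (H2 eps Heps) as [M [HM HM2]]. exists M.
    intros b pr Hb. rewrite <- RInt_Reals. now apply HM2.
Qed.

Lemma HI_of f l : has_integral_0_inf f l -> HI f l.
Proof.
  intros [H1 H2]; split.
  - intros b Hb. destruct (H1 b Hb) as [pr _]. now apply ex_RInt_Reals_1.
  - intros eps Heps. destruct (H2 eps Heps) as [M HM]. exists (Rmax 0 M). split. apply Rmax_l.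
    intros b Hb. assert (H : 0 <= b) by (eapply Rle_trans; [apply Rmax_l|exact Hb]).
    destruct (H1 b H) as [pr _]. rewrite (RInt_Reals _ _ _ pr). apply HM.
    eapply Rle_trans; [apply Rmax_r| exact Hb].
Qed.

Lemma HI_ext f g l : (forall t, 0 <= t -> f t = g t) -> HI f l -> HI g l.
Proof.
  intros E [H1 H2]; split.
  - intros b Hb. apply (ex_RInt_ext f); [|now apply H1].
    intros x Hx. apply E. rewrite Rmin_left in Hx; lra.
  - intros eps Heps. destruct (H2 eps Heps) as [M [HM HM2]]. exists M. split; auto.
    intros b Hb. rewrite <- (RInt_ext f). now apply HM2.
    intros x Hx. apply E. rewrite Rmin_left in Hx; lra.
Qed.

Lemma exR_lin (f g : R -> R) a b k1 k2 : ex_RInt f a b -> ex_RInt g a b ->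
  ex_RInt (fun t => k1 * f t + k2 * g t) a b.
Proof.
  intros Hf Hg.
  pose proof (ex_RInt_plus (V:=R_NormedModule) _ _ _ _ (ex_RInt_scal _ _ _ k1 Hf) (ex_RInt_scal _ _ _ k2 Hg)) as H.
  exact H.
Qed.

Lemma isR_lin (f g : R -> R) a b k1 k2 If Ig : is_RInt f a b If -> is_RInt g a b Ig ->
  is_RInt (fun t => k1 * f t + k2 * g t) a b (k1 * If + k2 * Ig).
Proof.
  intros Hf Hg.
  pose proof (is_RInt_plus (V:=R_NormedModule) _ _ _ _ _ _ (is_RInt_scal _ _ _ k1 _ Hf) (is_RInt_scal _ _ _ k2 _ Hg)) as H.
  exact H.
Qed.

Lemma RInt_lin (f g : R -> R) a b k1 k2 : ex_RInt f a b -> ex_RInt g a b ->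
  RInt (fun t => k1 * f t + k2 * g t) a b = k1 * RInt f a b + k2 * RInt g a b.
Proof.
  intros Hf Hg. apply is_RInt_unique. apply isR_lin; now apply (RInt_correct (V:=R_CompleteNormedModule)).
Qed.

Lemma HI_lin f g a c l1 l2 : HI f l1 -> HI g l2 ->
  HI (fun t => a * f t + c * g t) (a * l1 + c * l2).
Proof.
  intros [F1 F2] [G1 G2]; split.
  - intros b Hb. apply exR_lin; auto.
  - intros eps Heps.
    set (e := eps / (Rabs a + Rabs c + 1)).
    assert (Hp : 0 < Rabs a + Rabs c + 1) by (pose proof (Rabs_pos a); pose proof (Rabs_pos c); lra).
    assert (He : 0 < e) by (unfold e; apply Rdiv_lt_0_compat; auto).
    destruct (F2 e He) as [M1 [HM1 HM1']]. destruct (G2 e He) as [M2 [HM2 HM2']].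
    exists (Rmax M1 M2). split. eapply Rle_trans; [exact HM1| apply Rmax_l].
    intros b Hb.
    assert (b1 : M1 <= b) by (eapply Rle_trans; [apply Rmax_l|exact Hb]).
    assert (b2 : M2 <= b) by (eapply Rle_trans; [apply Rmax_r|exact Hb]).
    assert (Hb0 : 0 <= b) by lra.
    rewrite RInt_lin by auto.
    specialize (HM1' b b1). specialize (HM2' b b2).
    replace (a * RInt f 0 b + c * RInt g 0 b - (a * l1 + c * l2)) with
       (a * (RInt f 0 b - l1) + c * (RInt g 0 b - l2)) by ring.
    eapply Rle_lt_trans. apply Rabs_triang. rewrite !Rabs_mult.
    assert (Rabs a * Rabs (RInt f 0 b - l1) <= Rabs a * e) by
      (apply Rmult_le_compat_l; [apply Rabs_pos| lra]).
    assert (Rabs c * Rabs (RInt g 0 b - l2) <= Rabs c * e) by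
      (apply Rmult_le_compat_l; [apply Rabs_pos| lra]).
    assert (Rabs a * e + Rabs c * e < eps).
    { assert (E : Rabs a * e + Rabs c * e = eps * ((Rabs a + Rabs c) / (Rabs a + Rabs c + 1))).
      { unfold e. field. lra. }
      rewrite E. rewrite <- (Rmult_1_r eps) at 2. apply Rmult_lt_compat_l; auto.
      apply Rmult_lt_reg_r with (Rabs a + Rabs c + 1); auto.
      unfold Rdiv. rewrite Rmult_assoc, Rinv_l by lra. lra. }
    lra.
Qed.

Lemma exp_small c eps : 0 < c -> 0 < eps -> exists M, 0 <= M /\ forall b, M <= b -> exp (- c * b) < eps.
Proof.
  intros Hc He. exists (Rmax 0 (- ln (eps / 2) / c)). split. apply Rmax_l.
  intros b Hb.
  assert (H1 : - ln (eps / 2) / c <= b) by (eapply Rle_trans; [apply Rmax_r|exact Hb]).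
  assert (H2 : - c * b <= ln (eps / 2)).
  { apply (Rmult_le_compat_l c) in H1; [|lra]. field_simplify in H1; lra. }
  apply Rle_lt_trans with (exp (ln (eps/2))).
  destruct H2 as [H2|H2]. left; now apply exp_increasing. rewrite H2; lra.
  rewrite exp_ln; lra.
Qed.

Lemma w_int delta : 0 < delta -> HI (fun t => delta * exp (- delta * t)) 1.
Proof.
  intros Hd.
  assert (Hi : forall b, is_RInt (fun t => delta * exp (- delta * t)) 0 b (1 - exp (- delta * b))).
  { intros b.
    assert (H := is_RInt_derive (V:=R_CompleteNormedModule) (fun t => - exp (- delta * t)) (fun t => delta * exp (- delta * t)) 0 b).
    replace (1 - exp (- delta * b)) with (minus (- exp (- delta * b)) (- exp (- delta * 0))).
    apply H.
    - intros x _. auto_derive; auto. ring.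
    - intros x _. apply (ex_derive_continuous (K:=R_AbsRing) (V:=R_NormedModule)). auto_derive; auto.
    - unfold minus, plus, opp; simpl. rewrite Rmult_0_r, exp_0. ring. }
  split.
  - intros b _. eexists; apply Hi.
  - intros eps He. destruct (exp_small delta eps Hd He) as [M [HM HM2]]. exists M; split; auto.
    intros b Hb. rewrite (is_RInt_unique _ _ _ _ (Hi b)).
    replace (1 - exp (- delta * b) - 1) with (- exp (- delta * b)) by ring.
    rewrite Rabs_Ropp, Rabs_pos_eq. now apply HM2. left; apply exp_pos.
Qed.

Lemma w_val delta b : RInt (fun t => delta * exp (- delta * t)) 0 b = 1 - exp (- delta * b).
Proof.
  apply is_RInt_unique.
  assert (H := is_RInt_derive (V:=R_CompleteNormedModule) (fun t => - exp (- delta * t)) (fun t => delta * exp (- delta * t)) 0 b).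
  replace (1 - exp (- delta * b)) with (minus (- exp (- delta * b)) (- exp (- delta * 0))).
  apply H.
  - intros x _. auto_derive; auto. ring.
  - intros x _. apply (ex_derive_continuous (K:=R_AbsRing) (V:=R_NormedModule)). auto_derive; auto.
  - unfold minus, plus, opp; simpl. rewrite Rmult_0_r, exp_0. ring.
Qed.

Lemma pos_den x u : x < 1 -> 0 < u <= 1 -> 0 < 1 - x * u.
Proof.
  intros Hx Hu. destruct (Rle_dec x 0).
  - assert (x * u <= 0) by nra. lra.
  - assert (x * u <= x) by nra. lra.
Qed.

Lemma key delta lm x F : 0 < delta -> 0 < lm -> x < 1 ->
  has_integral_0_1 (fun t => (delta/lm) * Rpower t (delta/lm - 1) / (1 - x * t)) F ->
  HI (fun t => delta * exp (- delta * t) / (1 - x * exp (- lm * t))) F.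
Proof.
  intros Hd Hl Hx [HF1 HF2].
  set (g := delta / lm).
  set (f := fun t => g * Rpower t (g - 1) / (1 - x * t)).
  assert (Hea : forall b, 0 <= b -> 0 < exp (- lm * b) <= 1).
  { intros b Hb. split. apply exp_pos. rewrite <- exp_0.
    destruct (Req_dec b 0) as [->|Hb0]. rewrite Rmult_0_r; lra.
    left; apply exp_increasing. nra. }
  assert (Hexf : forall a, 0 < a <= 1 -> ex_RInt f a 1).
  { intros a Ha. destruct (HF1 a Ha) as [pr _]. now apply ex_RInt_Reals_1. }
  assert (Hi : forall b, 0 <= b -> is_RInt (fun t => delta * exp (- delta * t) / (1 - x * exp (- lm * t))) 0 b (RInt f (exp (- lm * b)) 1)).
  { intros b Hb.
    assert (H := is_RInt_comp (V:=R_CompleteNormedModule) f (fun t => exp (- lm * t)) (fun t => - lm * exp (- lm * t)) 0 b).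
    rewrite Rmin_left, Rmax_right in H by lra.
    assert (HC : forall y, 0 <= y <= b -> continuous f (exp (- lm * y))).
    { intros y Hy. apply (ex_derive_continuous (K:=R_AbsRing) (V:=R_NormedModule)).
        unfold f, Rpower. pose proof (Hea y (proj1 Hy)).
        pose proof (pos_den x (exp (- lm * y)) Hx H0).
        auto_derive. repeat split; lra. }
    assert (HD : forall y, 0 <= y <= b -> is_derive (fun t => exp (- lm * t)) y (- lm * exp (- lm * y)) /\ continuous (fun t => - lm * exp (- lm * t)) y).
    { intros y Hy. split. auto_derive; auto. ring.
        apply (ex_derive_continuous (K:=R_AbsRing) (V:=R_NormedModule)). auto_derive; auto. }
    specialize (H HC HD).
    pose proof (is_RInt_opp (V:=R_NormedModule) _ _ _ _ H) as H1.
    assert (H' : is_RInt (fun y => - ((- lm * exp (- lm * y)) * f (exp (- lm * y)))) 0 b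
                   (- (RInt f (exp (- lm * 0)) (exp (- lm * b))))) by exact H1.
    clear H H1.
    rewrite Rmult_0_r, exp_0 in H'.
    replace (- RInt f 1 (exp (- lm * b))) with (RInt f (exp (- lm * b)) 1) in H'.
    2: { symmetry. apply (opp_RInt_swap (V:=R_CompleteNormedModule)).
         apply ex_RInt_swap. apply Hexf. now apply Hea. }
    apply (is_RInt_ext (V:=R_NormedModule)) with (2 := H').
    rewrite Rmin_left, Rmax_right by lra. intros y Hy.
    unfold f, Rpower. rewrite ln_exp.
    assert (E : exp ((g - 1) * (- lm * y)) = exp (- delta * y) / exp (- lm * y)).
    { unfold Rdiv. rewrite <- exp_Ropp, <- exp_plus. f_equal. unfold g. field. lra. }
    rewrite E. unfold g. match goal with |- ?a = ?b => change (@eq R a b) end. pose proof (pos_den x (exp (- lm * y)) Hx (Hea y ltac:(lra))).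
    pose proof (exp_pos (- lm * y)). field. repeat split; lra. }
  split.
  - intros b Hb. eexists; now apply Hi.
  - intros eps He. destruct (HF2 eps He) as [d [Hd0 Hd1]].
    destruct (exp_small lm d Hl Hd0) as [M [HM HM2]]. exists M. split; auto.
    intros b Hb. rewrite (is_RInt_unique _ _ _ _ (Hi b ltac:(lra))).
    destruct (HF1 (exp (- lm * b))) as [pr _]. apply Hea; lra.
    rewrite (RInt_Reals f _ _ pr). apply Hd1. split. apply exp_pos. now apply HM2.
    apply Hea; lra.
Qed.

Lemma q_lt1 alpha beta : 0 <= beta -> beta < alpha -> 0 <= qq alpha beta < 1.
Proof.
  intros Hb Ha. unfold qq. split.
  apply Rmult_le_pos; [lra| left; apply Rinv_0_lt_compat; lra].
  apply (Rmult_lt_reg_r alpha); [lra|]. unfold Rdiv. rewrite Rmult_assoc, Rinv_l; lra.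
Qed.

Lemma xi_lt1 q z : q < 1 -> 0 <= z < 1 -> xi q z < 1.
Proof.
  intros Hq Hz. unfold xi. apply (Rmult_lt_reg_r (1 - z)); [lra|].
  unfold Rdiv. rewrite Rmult_assoc, Rinv_l; lra.
Qed.

Lemma den_pos alpha beta z t : 0 <= beta -> beta < alpha -> 0 <= z < 1 -> 0 <= t ->
  0 < 1 - xi (qq alpha beta) z * exp (- lam alpha beta * t).
Proof.
  intros Hb Ha Hz Ht. apply pos_den. apply xi_lt1; auto. apply q_lt1; auto.
  split. apply exp_pos. rewrite <- exp_0. unfold lam.
  destruct (Req_dec t 0) as [->|Ht0]. rewrite Rmult_0_r; lra.
  left; apply exp_increasing. nra.
Qed.

Lemma h_int delta alpha beta z F : 0 < delta -> 0 <= beta -> beta < alpha -> 0 <= z < 1 ->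
  hyp2F1_1 (gam delta alpha beta) (xi (qq alpha beta) z) F ->
  HI (fun t => delta * exp (- delta * t) / (1 - xi (qq alpha beta) z * exp (- lam alpha beta * t))) F.
Proof.
  intros Hd Hb Ha Hz HF. unfold lam. apply key; auto. lra.
  apply xi_lt1; auto. apply q_lt1; auto.
Qed.

Lemma part2 delta alpha beta z F : 0 < delta -> 0 <= beta -> beta < alpha -> 0 <= z < 1 ->
  hyp2F1_1 (gam delta alpha beta) (xi (qq alpha beta) z) F ->
  HI (fun t => phi alpha beta t z * (delta * exp (- delta * t))) (1 - (1 - qq alpha beta) * F).
Proof.
  intros Hd Hb Ha Hz HF.
  pose proof (HI_lin _ _ 1 (- (1 - qq alpha beta)) _ _ (w_int delta Hd) (h_int _ _ _ _ _ Hd Hb Ha Hz HF)) as H.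
  replace (1 - (1 - qq alpha beta) * F) with (1 * 1 + - (1 - qq alpha beta) * F) by ring.
  apply (HI_ext _ _ _) with (2 := H).
  intros t Ht. pose proof (den_pos alpha beta z t Hb Ha Hz Ht). unfold phi. field. lra.
Qed.

Lemma part3 delta alpha beta z F : 0 < delta -> 0 <= beta -> beta < alpha -> 0 <= z < 1 ->
  hyp2F1_1 (gam delta alpha beta) (xi (qq alpha beta) z) F ->
  HI (fun t => (phi alpha beta t z - 1) * (delta * exp (- delta * t))) (- (1 - qq alpha beta) * F).
Proof.
  intros Hd Hb Ha Hz HF.
  pose proof (HI_lin _ _ 0 (- (1 - qq alpha beta)) _ _ (w_int delta Hd) (h_int _ _ _ _ _ Hd Hb Ha Hz HF)) as H.
  replace (- (1 - qq alpha beta) * F) with (0 * 1 + - (1 - qq alpha beta) * F) by ring.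
  apply (HI_ext _ _ _) with (2 := H).
  intros t Ht. pose proof (den_pos alpha beta z t Hb Ha Hz Ht). unfold phi. field. lra.
Qed.

Lemma lim_le_const U l B : Un_cv U l -> (forall n, U n <= B) -> l <= B.
Proof.
  intros H HB. destruct (Rle_dec l B) as [|Hn]; auto. exfalso.
  destruct (H (l - B)) as [N HN]. lra.
  specialize (HN N (le_n N)). specialize (HB N). unfold Rdist in HN.
  apply Rabs_def2 in HN. lra.
Qed.

Lemma isum_le a b la lb : infinite_sum a la -> infinite_sum b lb -> (forall n, a n <= b n) -> la <= lb.
Proof.
  intros Ha Hb H. refine (Rle_cv_lim _ Ha Hb).
  intros N. apply sum_Rle. intros; auto.
Qed.

Lemma isum_plus a b la lb : infinite_sum a la -> infinite_sum b lb -> infinite_sum (fun n => a n + b n) (la + lb).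
Proof.
  intros Ha Hb. unfold infinite_sum.
  assert (H := CV_plus _ _ _ _ Ha Hb). intros eps He. destruct (H eps He) as [N HN].
  exists N. intros n Hn. rewrite plus_sum. now apply HN.
Qed.

Lemma cv_const c : Un_cv (fun _ => c) c.
Proof. intros e He. exists 0%nat. intros. unfold Rdist. unfold Rminus. rewrite Rplus_opp_r, Rabs_R0. exact He. Qed.

Lemma isum_scal a la c : infinite_sum a la -> infinite_sum (fun n => c * a n) (c * la).
Proof.
  intros Ha. assert (H := CV_mult (fun _ => c) _ c la (cv_const c) Ha).
  intros eps He. destruct (H eps He) as [N HN]. exists N. intros n Hn.
  specialize (HN n Hn). simpl in HN. rewrite scal_sum in HN.
  erewrite sum_eq. exact HN. intros; simpl; ring.
Qed.

Lemma isum_ext a b l : (forall n, a n = b n) -> infinite_sum a l -> infinite_sum b l.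
Proof.
  intros E H eps He. destruct (H eps He) as [N HN]. exists N. intros n Hn.
  erewrite sum_eq. now apply HN. intros; symmetry; auto.
Qed.

Lemma isum_finsum (u : nat -> nat -> R) s K :
  (forall k, (k <= K)%nat -> infinite_sum (u k) (s k)) ->
  infinite_sum (fun n => sum_f_R0 (fun k => u k n) K) (sum_f_R0 s K).
Proof.
  induction K as [|K IH]; intros H.
  - simpl. now apply H.
  - simpl. apply isum_plus. apply IH; intros; apply H; lia. apply H; lia.
Qed.

Lemma term_le_sum a n : (forall k, 0 <= a k) -> a n <= sum_f_R0 a n.
Proof.
  intros H. destruct n. simpl; lra. rewrite tech5.
  pose proof (cond_pos_sum a n H). lra.
Qed.

Lemma term_le_lim a l n : (forall k, 0 <= a k) -> infinite_sum a l -> a n <= l.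
Proof.
  intros H Hl. eapply Rle_trans. apply term_le_sum; auto. apply sum_incr; auto.
Qed.

Lemma isum_mono_bound a B : (forall n, 0 <= a n) -> (forall N, sum_f_R0 a N <= B) ->
  exists l, infinite_sum a l /\ l <= B.
Proof.
  intros H HB. destruct (growing_cv (fun N => sum_f_R0 a N)) as [l Hl].
  - intros n. simpl. pose proof (H (S n)). lra.
  - exists B. intros x [n ->]. auto.
  - exists l. split; auto. eapply lim_le_const; eauto.
Qed.

Lemma tonelli (u : nat -> nat -> R) (s : nat -> R) S :
  (forall k n, 0 <= u k n) -> (forall k, infinite_sum (u k) (s k)) -> infinite_sum s S ->
  exists r, (forall n, infinite_sum (fun k => u k n) (r n)) /\ infinite_sum r S.
Proof.
  intros Hu Hs HS.
  assert (Hle : forall k n, u k n <= s k) by (intros; apply term_le_lim; auto).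
  assert (Hc : forall n, forall k, 0 <= u k n <= s k) by (intros; split; auto).
  set (r := fun n => proj1_sig (Rseries_CV_comp (fun k => u k n) s (Hc n) (exist _ S HS))).
  assert (Hr : forall n, infinite_sum (fun k => u k n) (r n)).
  { intros n. unfold r. destruct (Rseries_CV_comp (fun k => u k n) s (Hc n) (exist _ S HS)). simpl. exact u0. }
  exists r. split; auto.
  assert (Hr0 : forall n, 0 <= r n).
  { intros n. eapply Rle_trans. apply (Hu 0%nat n). apply (term_le_lim (fun k => u k n)); auto. }
  destruct (isum_mono_bound r S Hr0) as [T [HT HTS]].
  { intros N. apply (isum_le (fun k => sum_f_R0 (fun n => u k n) N) s).
    - apply (isum_finsum (fun n k => u k n)). intros; apply Hr.
    - exact HS.
    - intros k. apply sum_incr; auto. apply Hs. }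
  assert (HST : S <= T).
  { apply (lim_le_const (fun N => sum_f_R0 s N)); auto. intros K.
    apply (isum_le (fun n => sum_f_R0 (fun k => u k n) K) r).
    - apply (isum_finsum u). intros; apply Hs.
    - exact HT.
    - intros n. apply (sum_incr (fun k => u k n)); auto. apply Hr. }
  replace S with T by lra. exact HT.
Qed.

Lemma ident_step (d : nat -> R) C m z : 0 <= C -> (forall n, Rabs (d n) <= C * 2 ^ n) ->
  (forall j, (j < m)%nat -> d j = 0) -> 0 < z <= /4 ->
  forall N, (m <= N)%nat ->
  Rabs (sum_f_R0 (fun n => d n * z ^ n) N - d m * z ^ m) <= 2 * C * ((2 * z) ^ (S m) - (2 * z) ^ (S N)).
Proof.
  intros HC Hd H0 Hz.
  assert (Hzero : forall N, (N < m)%nat -> sum_f_R0 (fun n => d n * z ^ n) N = 0).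
  { induction N; intros HN. simpl. rewrite H0 by lia. ring.
    rewrite tech5, IHN by lia. rewrite H0 by lia. ring. }
  assert (Hterm : forall n, Rabs (d n * z ^ n) <= C * (2 * z) ^ n).
  { intros n. rewrite Rabs_mult, (Rabs_pos_eq (z ^ n)) by (apply pow_le; lra).
    rewrite Rpow_mult_distr, <- Rmult_assoc. apply Rmult_le_compat_r. apply pow_le; lra. auto. }
  induction N as [|N IH]; intros HmN.
  - assert (m = 0%nat) by lia. subst m. simpl. rewrite Rmult_1_r.
    unfold Rminus. rewrite Rplus_opp_r, Rabs_R0. nra.
  - destruct (Nat.eq_dec m (S N)) as [Em|Em].
    + subst m. rewrite tech5, Hzero by lia. 
      replace (0 + d (S N) * z ^ S N - d (S N) * z ^ S N) with 0 by ring. rewrite Rabs_R0.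
      unfold Rminus. rewrite Rplus_opp_r. lra.
    + rewrite tech5. specialize (IH ltac:(lia)). specialize (Hterm (S N)).
      replace (sum_f_R0 (fun n => d n * z ^ n) N + d (S N) * z ^ S N - d m * z ^ m) with
        ((sum_f_R0 (fun n => d n * z ^ n) N - d m * z ^ m) + d (S N) * z ^ S N) by ring.
      eapply Rle_trans. apply Rabs_triang.
      assert (Hp : 0 <= (2 * z) ^ S N) by (apply pow_le; lra).
      assert (E : (2 * z) ^ S (S N) = (2*z) * (2 * z) ^ S N) by reflexivity.
      rewrite E. assert (C * (2 * z) * (2 * z) ^ S N <= C * /2 * (2 * z) ^ S N).
      { apply Rmult_le_compat_r; auto. apply Rmult_le_compat_l; lra. }
      nra.
Qed.

Lemma ident (d : nat -> R) C : (forall n, Rabs (d n) <= C * 2 ^ n) ->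
  (forall z, 0 < z <= /4 -> infinite_sum (fun n => d n * z ^ n) 0) -> forall n, d n = 0.
Proof.
  intros Hd Hs.
  assert (HC : 0 <= C). { specialize (Hd 0%nat). simpl in Hd. pose proof (Rabs_pos (d 0%nat)). lra. }
  assert (Main : forall m, (forall j, (j < m)%nat -> d j = 0) -> d m = 0).
  { intros m Hm.
    assert (Hb : forall z, 0 < z <= /4 -> Rabs (d m) * z ^ m <= 2 * C * (2 * z) ^ S m).
    { intros z Hz. apply Rle_plus_epsilon. intros eps He.
      destruct (Hs z Hz eps He) as [N HN].
      specialize (HN (N + m)%nat ltac:(lia)). unfold Rdist in HN. rewrite Rminus_0_r in HN.
      pose proof (ident_step d C m z HC Hd Hm Hz (N + m)%nat ltac:(lia)) as H1.
      assert (0 <= (2 * z) ^ S (N + m)) by (apply pow_le; lra).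
      replace (Rabs (d m) * z ^ m) with (Rabs (d m * z ^ m)).
      2: { rewrite Rabs_mult, (Rabs_pos_eq (z ^ m)) by (apply pow_le; lra). reflexivity. }
      pose proof (Rabs_triang_inv (sum_f_R0 (fun n : nat => d n * z ^ n) (N + m)) (sum_f_R0 (fun n : nat => d n * z ^ n) (N + m) - d m * z ^ m)).
      replace (sum_f_R0 (fun n : nat => d n * z ^ n) (N + m) - (sum_f_R0 (fun n : nat => d n * z ^ n) (N + m) - d m * z ^ m)) with (d m * z ^ m) in H0 by ring.
      rewrite Rabs_minus_sym in H0.
      assert (Rabs (d m * z ^ m) <= Rabs (sum_f_R0 (fun n : nat => d n * z ^ n) (N + m) - d m * z ^ m) + Rabs (sum_f_R0 (fun n : nat => d n * z ^ n) (N + m))).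
      { pose proof (Rabs_triang (d m * z ^ m - sum_f_R0 (fun n : nat => d n * z ^ n) (N + m)) (sum_f_R0 (fun n : nat => d n * z ^ n) (N + m))).
        replace (d m * z ^ m - sum_f_R0 (fun n : nat => d n * z ^ n) (N + m) + sum_f_R0 (fun n : nat => d n * z ^ n) (N + m)) with (d m * z ^ m) in H2 by ring.
        rewrite Rabs_minus_sym in H2. lra. }
      nra. }
    assert (Hb2 : forall z, 0 < z <= /4 -> Rabs (d m) <= 4 * C * 2 ^ m * z).
    { intros z Hz. specialize (Hb z Hz). rewrite Rpow_mult_distr in Hb.
      simpl in Hb. assert (0 < z ^ m) by (apply pow_lt; lra).
      apply (Rmult_le_reg_r (z ^ m)); auto. nra. }
    destruct (Req_dec C 0) as [C0|C0].
    - specialize (Hd m). rewrite C0, Rmult_0_l in Hd. pose proof (Rabs_pos (d m)).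
      apply Rabs_eq_0. lra.
    - assert (Hp : 0 < 8 * C * 2 ^ m). { pose proof (pow_lt 2 m ltac:(lra)). nra. }
      destruct (Req_dec (d m) 0) as [|Hne]; auto. exfalso.
      pose proof (Rabs_pos_lt _ Hne) as Ha.
      set (z := Rmin (/4) (Rabs (d m) / (8 * C * 2 ^ m))).
      assert (Hz : 0 < z <= /4).
      { unfold z. split. apply Rmin_glb_lt. lra. apply Rdiv_lt_0_compat; auto. apply Rmin_l. }
      specialize (Hb2 z Hz).
      assert (z <= Rabs (d m) / (8 * C * 2 ^ m)) by apply Rmin_r.
      assert (4 * C * 2 ^ m * z <= Rabs (d m) / 2).
      { replace (Rabs (d m) / 2) with (4 * C * 2 ^ m * (Rabs (d m) / (8 * C * 2 ^ m))) by (field; pose proof (pow_lt 2 m ltac:(lra)); repeat split; lra).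
        apply Rmult_le_compat_l; auto. lra. }
      lra. }
  intros n. induction n as [n IHn] using (well_founded_induction Nat.lt_wf_0).
  apply Main. intros; apply IHn; lia.
Qed.

Lemma conv_nonneg p r : (forall n, 0 <= p n) -> (forall n, 0 <= r n) -> forall n, 0 <= conv p r n.
Proof.
  intros Hp Hr n. unfold conv. apply cond_pos_sum. intros i. apply Rmult_le_pos; auto.
Qed.

Lemma conv_pow_nonneg p : (forall n, 0 <= p n) -> forall k n, 0 <= conv_pow p k n.
Proof.
  intros Hp k. induction k; intros n.
  - simpl. destruct n; lra.
  - simpl. apply conv_nonneg; auto.
Qed.

Lemma pgf_conv p r z Gp Gr : (forall n, 0 <= p n) -> (forall n, 0 <= r n) -> 0 <= z ->
  infinite_sum (fun n => p n * z ^ n) Gp -> infinite_sum (fun n => r n * z ^ n) Gr ->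
  infinite_sum (fun n => conv p r n * z ^ n) (Gp * Gr).
Proof.
  intros Hp Hr Hz H1 H2.
  apply is_series_Reals in H1. apply is_series_Reals in H2.
  assert (H := is_series_mult_pos _ _ _ _ H1 H2).
  assert (H' : is_series (fun n : nat =>
       sum_f_R0 (fun k : nat => p k * z ^ k * (r (n - k)%nat * z ^ (n - k))) n) (Gp * Gr)).
  { apply H; intros; apply Rmult_le_pos; auto; apply pow_le; auto. }
  apply is_series_Reals. revert H'. apply is_series_ext.
  intros n. unfold conv. rewrite Rmult_comm, scal_sum. apply sum_eq. intros i Hi.
  replace (z ^ n) with (z ^ i * z ^ (n - i)) by (rewrite <- pow_add; f_equal; lia). ring.
Qed.

Lemma sum_delta0 z N : sum_f_R0 (fun n => conv_pow (fun _ => 0) 0 n * z ^ n) N = 1.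
Proof.
  induction N. simpl. ring. rewrite tech5, IHN. simpl. ring.
Qed.

Lemma conv_pow_pgf p z G : (forall n, 0 <= p n) -> 0 <= z ->
  infinite_sum (fun n => p n * z ^ n) G ->
  forall k, infinite_sum (fun n => conv_pow p k n * z ^ n) (G ^ k).
Proof.
  intros Hp Hz HG k. induction k.
  - simpl. intros eps He. exists 0%nat. intros n _.
    pose proof (sum_delta0 z n) as E. simpl in E. simpl. rewrite E. unfold Rdist. unfold Rminus. rewrite Rplus_opp_r, Rabs_R0. auto.
  - simpl. apply pgf_conv; auto. apply conv_pow_nonneg; auto.
Qed.

Lemma expin x : exp_in x (exp x).
Proof. unfold exp. destruct (exist_exp x). simpl. exact e. Qed.

Lemma pois_series mu x : infinite_sum (fun k => poisson_pmf mu k * x ^ k) (exp (mu * (x - 1))).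
Proof.
  replace (exp (mu * (x - 1))) with (exp (- mu) * exp (mu * x)).
  2: { rewrite <- exp_plus. f_equal. ring. }
  apply (isum_ext (fun k => exp (- mu) * (/ INR (fact k) * (mu * x) ^ k))).
  - intros k. unfold poisson_pmf. rewrite Rpow_mult_distr. unfold Rdiv. ring.
  - apply isum_scal. apply expin.
Qed.

Lemma sum_mono a m n : (forall k, 0 <= a k) -> (m <= n)%nat -> sum_f_R0 a m <= sum_f_R0 a n.
Proof.
  intros Ha Hle. induction Hle. lra. rewrite tech5. pose proof (Ha (S m0)). lra.
Qed.

Lemma pow_le1' z k : 0 <= z <= 1 -> z ^ k <= 1.
Proof.
  intros Hz. induction k. simpl; lra. simpl. pose proof (pow_le z k ltac:(lra)). nra.
Qed.

Lemma pow_anti z m n : 0 <= z <= 1 -> (m <= n)%nat -> z ^ n <= z ^ m.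
Proof.
  intros Hz Hle. replace n with (m + (n - m))%nat by lia. rewrite pow_add.
  pose proof (pow_le z m ltac:(lra)). pose proof (pow_le1' z (n - m) Hz). nra.
Qed.

Lemma tail_bound (a : nat -> R) z Phi N : (forall n, 0 <= a n) -> 0 <= z < 1 ->
  infinite_sum a 1 -> infinite_sum (fun n => a n * z ^ n) Phi ->
  sum_f_R0 (fun n => a n * z ^ n) N <= Phi <= sum_f_R0 (fun n => a n * z ^ n) N + z ^ (S N).
Proof.
  intros Ha Hz H1 HP.
  assert (Hnn : forall n, 0 <= a n * z ^ n) by (intros; apply Rmult_le_pos; auto; apply pow_le; lra).
  assert (HzN : 0 <= z ^ S N) by (apply pow_le; lra).
  split. apply sum_incr; auto.
  apply (lim_le_const (fun M => sum_f_R0 (fun n => a n * z ^ n) M)); auto.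
  assert (Hind : forall M, sum_f_R0 (fun n => a n * z ^ n) M <=
     sum_f_R0 (fun n => a n * z ^ n) N + z ^ S N * sum_f_R0 a M).
  { induction M.
    - pose proof (sum_mono _ 0 N Hnn ltac:(lia)). simpl in *. pose proof (Ha 0%nat). nra.
    - rewrite !tech5. destruct (Compare_dec.le_lt_dec (S M) N) as [Hle|Hlt].
      + pose proof (sum_mono _ (S M) N Hnn Hle). rewrite tech5 in H.
        assert (0 <= z ^ S N * (sum_f_R0 a M + a (S M))).
        { apply Rmult_le_pos; auto. pose proof (cond_pos_sum a M Ha). pose proof (Ha (S M)). lra. }
        lra.
      + assert (z ^ S M <= z ^ S N) by (apply pow_anti; [lra | lia]).
        pose proof (Ha (S M)). nra. }
  intros M. specialize (Hind M). pose proof (sum_incr a M 1 H1 Ha). nra.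
Qed.

Lemma HI_scal f l c : HI f l -> HI (fun t => c * f t) (c * l).
Proof.
  intros H. pose proof (HI_lin f f c 0 l l H H) as H'.
  replace (c * l) with (c * l + 0 * l) by ring.
  apply (HI_ext _ _ _) with (2 := H'). intros; ring.
Qed.

Lemma HI_ex f l b : HI f l -> 0 <= b -> ex_RInt f 0 b.
Proof. intros [H _] Hb. auto. Qed.

Lemma pgf_interchange (P : R -> nat -> R) (w Phi : R -> R) (pY : nat -> R) z g :
 0 <= z < 1 ->
 (forall t, 0 <= t -> 0 <= w t) ->
 (forall b, 0 <= b -> RInt w 0 b <= 1) ->
 HI w 1 ->
 (forall t n, 0 <= t -> 0 <= P t n) ->
 (forall t, 0 <= t -> infinite_sum (P t) 1) ->
 (forall t, 0 <= t -> infinite_sum (fun n => P t n * z ^ n) (Phi t)) ->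
 (forall n, HI (fun t => P t n * w t) (pY n)) ->
 HI (fun t => Phi t * w t) g ->
 infinite_sum (fun n => pY n * z ^ n) g.
Proof.
  intros Hz Hw Hw1 HIw HP0 HP1 HPz HY HPhi.
  set (SN := fun N t => sum_f_R0 (fun n => P t n * w t * z ^ n) N).
  assert (HS : forall N, HI (SN N) (sum_f_R0 (fun n => pY n * z ^ n) N)).
  { induction N.
    - unfold SN; simpl. pose proof (HI_scal _ _ 1 (HY 0%nat)) as H.
      replace (pY 0%nat * 1) with (1 * pY 0%nat) by ring.
      apply (HI_ext _ _ _) with (2 := H). intros; simpl; ring.
    - pose proof (HI_lin _ _ 1 (z ^ S N) _ _ IHN (HY (S N))) as H.
      replace (sum_f_R0 (fun n => pY n * z ^ n) (S N)) with
        (1 * sum_f_R0 (fun n => pY n * z ^ n) N + z ^ S N * pY (S N)) by (rewrite tech5; ring).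
      apply (HI_ext _ _ _) with (2 := H). intros t Ht. unfold SN. rewrite tech5. ring. }
  assert (Hpt : forall N t, 0 <= t -> SN N t <= Phi t * w t <= SN N t + z ^ S N * w t).
  { intros N t Ht. unfold SN.
    replace (sum_f_R0 (fun n => P t n * w t * z ^ n) N) with (w t * sum_f_R0 (fun n => P t n * z ^ n) N).
    2: { rewrite scal_sum. apply sum_eq. intros; ring. }
    pose proof (tail_bound (P t) z (Phi t) N (fun n => HP0 t n Ht) Hz (HP1 t Ht) (HPz t Ht)).
    pose proof (Hw t Ht). nra. }
  assert (Hb : forall N b, 0 <= b -> Rabs (RInt (SN N) 0 b - RInt (fun t => Phi t * w t) 0 b) <= z ^ S N).
  { intros N b Hb.
    assert (E1 : RInt (SN N) 0 b <= RInt (fun t => Phi t * w t) 0 b).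
    { apply RInt_le; auto. apply (HI_ex _ _ _ (HS N) Hb). apply (HI_ex _ _ _ HPhi Hb).
      intros t Ht. apply Hpt; lra. }
    assert (E2 : RInt (fun t => Phi t * w t) 0 b <= RInt (fun t => 1 * SN N t + z ^ S N * w t) 0 b).
    { apply RInt_le; auto. apply (HI_ex _ _ _ HPhi Hb).
      apply exR_lin. apply (HI_ex _ _ _ (HS N) Hb). apply (HI_ex _ _ _ HIw Hb).
      intros t Ht. rewrite Rmult_1_l. apply Hpt; lra. }
    rewrite RInt_lin in E2 by (apply (HI_ex _ _ _ (HS N) Hb) || apply (HI_ex _ _ _ HIw Hb)).
    pose proof (Hw1 b Hb). assert (0 <= z ^ S N) by (apply pow_le; lra).
    rewrite Rabs_minus_sym, Rabs_pos_eq by lra. nra. }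
  assert (HA : forall N, Rabs (sum_f_R0 (fun n => pY n * z ^ n) N - g) <= z ^ S N).
  { intros N. apply Rle_plus_epsilon. intros eps He.
    destruct HS with N as [_ H1]. destruct HPhi as [_ H2].
    destruct (H1 (eps/2) ltac:(lra)) as [M1 [HM1 HM1']].
    destruct (H2 (eps/2) ltac:(lra)) as [M2 [HM2 HM2']].
    set (b := Rmax M1 M2).
    assert (b1 : M1 <= b) by apply Rmax_l. assert (b2 : M2 <= b) by apply Rmax_r.
    specialize (HM1' b b1). specialize (HM2' b b2). specialize (Hb N b ltac:(lra)).
    set (A := sum_f_R0 (fun n => pY n * z ^ n) N) in *.
    set (X := RInt (SN N) 0 b) in *. set (Y := RInt (fun t => Phi t * w t) 0 b) in *.
    replace (A - g) with ((A - X) + (X - Y) + (Y - g)) by ring.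
    eapply Rle_trans. apply Rabs_triang. eapply Rle_trans. apply Rplus_le_compat_r. apply Rabs_triang.
    rewrite (Rabs_minus_sym A X). lra. }
  intros eps He. destruct (pow_lt_1_zero z ltac:(rewrite Rabs_pos_eq; lra) eps He) as [N0 HN0].
  exists N0. intros n Hn. unfold Rdist. eapply Rle_lt_trans. apply HA.
  specialize (HN0 (S n) ltac:(lia)). rewrite Rabs_pos_eq in HN0 by (apply pow_le; lra). exact HN0.
Qed.

Lemma HI_nonneg f l : HI f l -> (forall t, 0 <= t -> 0 <= f t) -> 0 <= l.
Proof.
  intros [H1 H2] Hf. destruct (Rle_dec 0 l) as [|Hn]; auto. exfalso.
  destruct (H2 (- l) ltac:(lra)) as [M [HM HM']]. specialize (HM' M (Rle_refl _)).
  assert (0 <= RInt f 0 M). { apply RInt_ge_0; auto. intros; apply Hf; lra. }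
  apply Rabs_def2 in HM'. lra.
Qed.

Theorem mainTheorem8
  (delta alpha beta theta : R)
  (Hdelta : 0 < delta) (Hbeta : 0 <= beta) (Hab : beta < alpha) (Htheta : 0 < theta)
  (pV : nat -> R) (HV : is_pmf pV)
  (HVpgf : forall z, 0 <= z < 1 -> exists F,
      hyp2F1_1 (gam delta alpha beta) (xi (qq alpha beta) z) F /\
      pgf_at pV z (exp (- (theta / gam delta alpha beta) * F)))
  (P : R -> nat -> R) (HP : is_BD_law alpha beta P)
  (pY : nat -> R)
  (HY : forall n, has_integral_0_inf (fun t => P t n * (delta * exp (- delta * t))) (pY n)) :
  (forall n, infinite_sum
     (fun k => poisson_pmf (theta / ((1 - qq alpha beta) * gam delta alpha beta)) k
               * conv_pow pY k n) (pV n)) /\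
  (forall z F, 0 <= z < 1 ->
     hyp2F1_1 (gam delta alpha beta) (xi (qq alpha beta) z) F ->
     has_integral_0_inf (fun t => phi alpha beta t z * (delta * exp (- delta * t)))
       (1 - (1 - qq alpha beta) * F)) /\
  (forall z G, 0 <= z < 1 -> pgf_at pV z G ->
     exists I, has_integral_0_inf
                 (fun t => (phi alpha beta t z - 1) * (delta * exp (- delta * t))) I /\
               ln G = theta / ((1 - qq alpha beta) * gam delta alpha beta) * I).
Proof.
  pose proof (q_lt1 alpha beta Hbeta Hab) as Hq.
  assert (Hg : 0 < gam delta alpha beta) by (unfold gam; apply Rdiv_lt_0_compat; lra).
  set (q := qq alpha beta) in *. set (g := gam delta alpha beta) in *.
  set (mu := theta / ((1 - q) * g)).
  assert (Hmu : 0 < mu) by (unfold mu; apply Rdiv_lt_0_compat; auto; apply Rmult_lt_0_compat; lra).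
  split; [|split].
  3: { intros z G Hz HG. destruct (HVpgf z Hz) as [F [HF HGF]].
       exists (- (1 - q) * F). split. apply HI_to. apply part3; auto.
       rewrite (uniqueness_sum _ _ _ HG HGF), ln_exp. unfold mu. field. lra. }
  2: { intros z F Hz HF. apply HI_to. apply part2; auto. }
  set (w := fun t => delta * exp (- delta * t)).
  assert (HYI : forall n, HI (fun t => P t n * w t) (pY n)) by (intros; apply HI_of; apply HY).
  assert (Hw0 : forall t, 0 <= t -> 0 <= w t) by (intros; unfold w; pose proof (exp_pos (- delta * t)); nra).
  assert (HP0 : forall t n, 0 <= t -> 0 <= P t n) by (intros t n Ht; apply (proj1 (proj1 (HP t Ht)))).
  assert (HpY0 : forall n, 0 <= pY n).
  { intros n. apply (HI_nonneg _ _ (HYI n)). intros t Ht. apply Rmult_le_pos; auto. }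
  assert (Hpois : forall k, 0 <= poisson_pmf mu k).
  { intros k. unfold poisson_pmf. apply Rmult_le_pos. apply Rmult_le_pos. left; apply exp_pos.
    apply pow_le; lra. left; apply Rinv_0_lt_compat. apply INR_fact_lt_0. }
  assert (HgY : forall z F, 0 <= z < 1 -> hyp2F1_1 g (xi q z) F ->
            infinite_sum (fun n => pY n * z ^ n) (1 - (1 - q) * F)).
  { intros z F Hz HF.
    apply (pgf_interchange P w (fun t => phi alpha beta t z) pY z); auto.
    - intros b Hb. unfold w. rewrite w_val. pose proof (exp_pos (- delta * b)). lra.
    - apply w_int; auto.
    - intros t Ht. apply (proj2 (proj1 (HP t Ht))).
    - intros t Ht. apply (proj2 (HP t Ht)); auto.
    - apply part2; auto. }
  assert (HT : forall z, 0 <= z < 1 -> exists F, hyp2F1_1 g (xi q z) F /\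
            pgf_at pV z (exp (mu * ((1 - (1 - q) * F) - 1))) /\
            exists r, (forall n, infinite_sum (fun k => poisson_pmf mu k * conv_pow pY k n * z ^ n) (r n))
               /\ infinite_sum r (exp (mu * ((1 - (1 - q) * F) - 1)))).
  { intros z Hz. destruct (HVpgf z Hz) as [F [HF HGF]]. exists F. split; auto. split.
    - replace (mu * (1 - (1 - q) * F - 1)) with (- (theta / g) * F). exact HGF.
      unfold mu. field. lra.
    - apply tonelli with (s := fun k => poisson_pmf mu k * (1 - (1 - q) * F) ^ k).
      + intros k n. apply Rmult_le_pos. apply Rmult_le_pos; auto. apply conv_pow_nonneg; auto.
        apply pow_le; lra.
      + intros k. apply (isum_ext (fun n => poisson_pmf mu k * (conv_pow pY k n * z ^ n))).
        intros; ring. apply isum_scal. apply conv_pow_pgf; auto. lra.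
      + apply pois_series. }
  intros n.
  destruct (HT (/2) ltac:(lra)) as [F0 [HF0 [HV0 [r0 [Hr0 HS0]]]]].
  set (S0 := exp (mu * (1 - (1 - q) * F0 - 1))) in *.
  assert (Hu0 : forall k m z, 0 <= z -> 0 <= poisson_pmf mu k * conv_pow pY k m * z ^ m).
  { intros k m z Hz. apply Rmult_le_pos. apply Rmult_le_pos; auto. apply conv_pow_nonneg; auto.
    apply pow_le; lra. }
  assert (Hr0pos : forall m, 0 <= r0 m).
  { intros m. eapply Rle_trans. apply (Hu0 0%nat m (/2)); lra.
    apply (term_le_lim (fun k => poisson_pmf mu k * conv_pow pY k m * (/2) ^ m)); auto.
    intros; apply Hu0; lra. }
  set (c := fun m => r0 m * 2 ^ m).
  assert (Hc : forall m, infinite_sum (fun k => poisson_pmf mu k * conv_pow pY k m) (c m)).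
  { intros m. apply (isum_ext (fun k => 2 ^ m * (poisson_pmf mu k * conv_pow pY k m * (/2) ^ m))).
    - intros k. replace (2 ^ m * (poisson_pmf mu k * conv_pow pY k m * (/ 2) ^ m)) with
        (poisson_pmf mu k * conv_pow pY k m * ((2 * / 2) ^ m)) by (rewrite Rpow_mult_distr; ring).
      rewrite Rinv_r, pow1 by lra. ring.
    - unfold c. rewrite Rmult_comm. apply isum_scal. apply Hr0. }
  assert (HcS : forall z, 0 <= z < 1 -> exists F, pgf_at pV z (exp (mu * ((1 - (1 - q) * F) - 1))) /\ infinite_sum (fun m => c m * z ^ m) (exp (mu * ((1 - (1 - q) * F) - 1)))).
  { intros z Hz. destruct (HT z Hz) as [F [_ [HVz [r [Hr HS]]]]]. exists F. split; auto.
    apply (isum_ext r); auto. intros m. apply (uniqueness_sum _ _ _ (Hr m)).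
    apply (isum_ext (fun k => z ^ m * (poisson_pmf mu k * conv_pow pY k m))).
    intros; ring. rewrite Rmult_comm. apply isum_scal. apply Hc. }
  assert (Hd : forall m, pV m - c m = 0).
  { apply (ident _ (1 + S0)).
    - intros m. assert (pV m <= 1) by (apply term_le_lim; [apply HV| apply HV]).
      assert (0 <= pV m) by apply HV.
      assert (r0 m <= S0) by (apply (term_le_lim r0); auto).
      assert (1 <= 2 ^ m) by (apply pow_R1_Rle; lra).
      assert (0 <= c m) by (unfold c; apply Rmult_le_pos; auto; apply pow_le; lra).
      assert (c m <= S0 * 2 ^ m) by (unfold c; apply Rmult_le_compat_r; auto; apply pow_le; lra).
      apply Rabs_le. nra.
    - intros z Hz. destruct (HcS z ltac:(lra)) as [F [H1 H2]].
      replace 0 with (exp (mu * (1 - (1 - q) * F - 1)) + (-1) * exp (mu * (1 - (1 - q) * F - 1))) by ring.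
      apply (isum_ext (fun m => pV m * z ^ m + (-1) * (c m * z ^ m))). intros; ring.
      apply isum_plus. exact H1. apply isum_scal. exact H2. }
  replace (pV n) with (c n) by (specialize (Hd n); lra). apply Hc.
Qed.
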